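(* Let $x,y\in\mathfrak h$. The numbers $\exp(\alpha_i(x+\sqrt{-1}y))$, $i=1,\dots,l$, are all real if and only if $y=\sum_{i=1}^lk_iy_i$ for some integers $k_i$. Moreover, for each $i$ and each odd integer $k_i$, the element $h_i=\exp(\sqrt{-1}k_iy_i)$ lies in $\tilde G$ and satisfies $h_i^2=e$ and $h_i\neq e$.
   Context: $\mathfrak g$ is a real split semisimple Lie algebra of rank $l$ with split Cartan subalgebra $\mathfrak h$ and simple roots $\alpha_1,\dots,\alpha_l$ (extended complex-linearly to $\mathfrak h_{\mathbb C}$). $G_{\mathbb C}$ is the connected adjoint group of $\mathfrak g\otimes\mathbb C$, with exponential map $\exp:\mathfrak g\otimes\mathbb C\to G_{\mathbb C}$, and $\tilde G=\{g\in G_{\mathbb C}:\mathrm{Ad}(g)\mathfrak g\subset\mathfrak g\}$. For $i=1,\dots,l$, $y_i=2\pi m^\circ_{\alpha_i}/(\alpha_i,\alpha_i)$, where $(\,,)$ is the Killing form and $m^\circ_{\alpha_i}\in\mathfrak h$ corresponds via the Killing form to the fundamental weight $m_{\alpha_i}$; equivalently $y_i\in\mathfrak h$ is determined by $\alpha_j(y_i)=\pi\delta_{ij}$ for all $j$. *)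

(* Defs.v *)
From mathcomp Require Import all_boot all_algebra.
From mathcomp Require Import all_classical all_reals all_analysis.
From mathcomp Require Import complex.
Import GRing.Theory Num.Theory.

Set Implicit Arguments.
Unset Strict Implicit.
Unset Printing Implicit Defensive.

Local Open Scope classical_set_scope.
Local Open Scope ring_scope.

Section LieDefs.
Variables (R : realType) (n : nat).
Implicit Types (br : 'rV[R]_n -> 'rV[R]_n -> 'rV[R]_n).

Definition lie_algebra br : Prop :=
  [/\ (forall (a : R) x y z, br (a *: x + y) z = a *: br x z + br y z),
      (forall (a : R) x y z, br x (a *: y + z) = a *: br x y + br x z),
      (forall x, br x x = 0) &
      (forall x y z, br x (br y z) + br y (br z x) + br z (br x y) = 0)].

(* ad x as a matrix acting on row vectors: v *m ad br x = br x v *)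
Definition ad br (x : 'rV[R]_n) : 'M[R]_n := lin1_mx (br x).

Definition killing br (x y : 'rV[R]_n) : R := \tr (ad br x *m ad br y).

Definition semisimple br : Prop :=
  lie_algebra br /\ forall x, (forall y, killing br x y = 0) -> x = 0.

(* h is given by a matrix Hb whose rows form a basis of h; an element of h
   is written c *m Hb with coordinates c : 'rV_l. *)
Definition split_cartan br (l : nat) (Hb : 'M[R]_(l, n)) : Prop :=
  [/\ row_free Hb,
      (forall c d : 'rV[R]_l, br (c *m Hb) (d *m Hb) = 0),
      (forall c : 'rV[R]_l, diagonalizable (ad br (c *m Hb))) &
      (forall x, (forall c : 'rV[R]_l, br x (c *m Hb) = 0) -> (x <= Hb)%MS)].

(* pairing of a linear functional a on h (given by its values on the basis
   of h) with the element of h of coordinates c *)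
Definition hval (l : nat) (a c : 'rV[R]_l) : R := \sum_(i < l) a 0 i * c 0 i.

Definition is_root br (l : nat) (Hb : 'M[R]_(l, n)) (a : 'rV[R]_l) : Prop :=
  a != 0 /\ exists v : 'rV[R]_n, v != 0 /\
    forall c : 'rV[R]_l, br (c *m Hb) v = hval a c *: v.

Definition simple_roots br (l : nat) (Hb : 'M[R]_(l, n))
    (al : 'I_l -> 'rV[R]_l) : Prop :=
  [/\ (forall i, is_root br Hb (al i)),
      row_free (\matrix_(i < l) al i) &
      (forall b, is_root br Hb b -> exists k : 'I_l -> int,
         b = \sum_(i < l) (k i)%:~R *: al i /\
         ((forall i, (0 <= k i)%R) \/ (forall i, (k i <= 0)%R)))].

(* complex-linear extension: alpha(x + sqrt(-1) y) *)
Definition alphaC (l : nat) (a cx cy : 'rV[R]_l) : R[i] :=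
  (hval a cx +i* hval a cy)%C.

Definition cexp (z : R[i]) : R[i] :=
  ((expR (complex.Re z))%:C * (cos (complex.Im z) +i* sin (complex.Im z)))%C.

(* g_C = g + sqrt(-1) g is modelled as 'rV_(n+n) (row_mx U V = U + iV).
   adC br X Y is (the realification of) ad(X + iY) on g_C. *)
Definition adC br (X Y : 'rV[R]_n) : 'M[R]_(n + n) :=
  lin1_mx (fun w : 'rV[R]_(n + n) =>
    row_mx (br X (lsubmx w) - br Y (rsubmx w))
           (br X (rsubmx w) + br Y (lsubmx w))).

Definition mexp (m : nat) (M : 'M[R]_m) : 'M[R]_m :=
  lim (series (fun k => (k`!%:R)^-1 *: M ^+ k) @ \oo).

(* G_C: the group generated by exp(ad Z), Z in g_C (acting on g_C) *)
Inductive inGC br : 'M[R]_(n + n) -> Prop :=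
  | GC1 : inGC br 1%:M
  | GCexp (X Y : 'rV[R]_n) (g : 'M[R]_(n + n)) :
      inGC br g -> inGC br (mexp (adC br X Y) *m g).

(* tilde G = { g in G_C : Ad(g) g \subset g } *)
Definition in_Gtilde br (g : 'M[R]_(n + n)) : Prop :=
  inGC br g /\
  forall U : 'rV[R]_n, exists U' : 'rV[R]_n, row_mx U 0 *m g = row_mx U' 0.

End LieDefs.

(* Main.v *)
Require Import Defs.
From mathcomp Require Import all_boot all_algebra.
From mathcomp Require Import all_classical all_reals all_analysis.
From mathcomp Require Import complex.
From mathcomp Require Import lra ring.
Import GRing.Theory Num.Theory.
Set Implicit Arguments.
Unset Strict Implicit.
Unset Printing Implicit Defensive.
Local Open Scope ring_scope.
Local Open Scope classical_set_scope.

Section A1.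
Variable R : realType.
Import numFieldNormedType.Exports.

Lemma mx_cvg_entries m k (F : nat -> 'M[R]_(m, k)) (A : 'M[R]_(m, k)) :
  (forall i j, F N i j @[N --> \oo] --> A i j) -> F @ \oo --> A.
Proof.
move=> H; apply/cvg_mx_entourageP => E entE.
have H' : forall ij : 'I_m * 'I_k,
    \forall N \near \oo, (A ij.1 ij.2, F N ij.1 ij.2) \in E.
  move=> [i j]; have /cvg_app_entourageP/(_ E entE) := H i j.
  by apply: filterS => N /= HN; rewrite inE.
have HH : \forall N \near \oo, forall ij : 'I_m * 'I_k,
    (A ij.1 ij.2, F N ij.1 ij.2) \in E by apply: filter_forall.
by apply: filterS HH => N HN i j; exact: (HN (i, j)).
Qed.

Lemma mx_entries_cvg m k (F : nat -> 'M[R]_(m, k)) (A : 'M[R]_(m, k)) i j :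
  F @ \oo --> A -> F N i j @[N --> \oo] --> A i j.
Proof.
move=> H0.
have H := (@cvg_mx_entourageP _ _ _ (F @ \oo) _ A).1 H0.
apply/cvg_entourageP => E entE.
apply: (@filterS nat \oo _ (fun N => forall i j, (A i j, F N i j) \in E)).
  by move=> N /(_ i j); rewrite inE.
exact: H _ E entE.
Qed.

Lemma mx_cvg_mull m k p (B : 'M[R]_(p, m)) (F : nat -> 'M[R]_(m, k)) A :
  F @ \oo --> A -> (fun N => B *m F N) @ \oo --> B *m A.
Proof.
move=> HF; apply: mx_cvg_entries => i j.
rewrite mxE; under eq_cvg do rewrite mxE.
apply: cvg_big => //; first exact: add_continuous.
move=> t _; apply: cvgM; first exact: cvg_cst.
exact: mx_entries_cvg.
Qed.

Lemma mx_cvg_rows m k (F : nat -> 'M[R]_(m, k)) (A : 'M[R]_(m, k)) :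
  (forall r, (fun N => row r (F N)) @ \oo --> row r A) -> F @ \oo --> A.
Proof.
move=> H; apply: mx_cvg_entries => i j.
have := @mx_entries_cvg _ _ _ _ 0 j (H i); rewrite mxE.
by under eq_cvg do rewrite mxE.
Qed.

Lemma mx_cvg_col m1 m2 k (F : nat -> 'M[R]_(m1, k)) (G : nat -> 'M[R]_(m2, k)) (A : 'M[R]_(m1, k)) (B : 'M[R]_(m2, k)) :
  F @ \oo --> A -> G @ \oo --> B ->
  (fun N => col_mx (F N) (G N)) @ \oo --> col_mx A B.
Proof.
move=> HF HG; apply: mx_cvg_entries => i j.
rewrite mxE; under eq_cvg do rewrite mxE.
by case: (fintype.split i) => i'; apply: mx_entries_cvg.
Qed.
End A1.

Section A2.
Variable R : realType.
Import numFieldNormedType.Exports.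

Lemma alt_int (f : R -> R) (r : R) (m : int) : alternating f pi ->
  f (r + m%:~R * pi) = (-1) ^+ `|m|%N * f r.
Proof.
move=> fa; case: m => k.
  by rewrite /= mulr_natl alternatingn.
rewrite NegzE /= mulrNz mulNr mulr_natl.
have := alternatingn fa k.+1 (r - pi *+ k.+1).
rewrite subrK => ->. by rewrite mulrA -exprD -signr_odd oddD addbb /= mul1r.
Qed.

Lemma sin_intpi (m : int) : sin (m%:~R * pi) = 0 :> R.
Proof. by rewrite -[_ * pi]add0r alt_int ?sin0 ?mulr0 //; exact: sinDpi. Qed.

Lemma cos_intpi (m : int) : cos (m%:~R * pi) = (-1) ^+ `|m|%N :> R.
Proof. by rewrite -[_ * pi]add0r alt_int ?cos0 ?mulr1 //; exact: cosDpi. Qed.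

Lemma sin_eq0_int (x : R) : sin x = 0 -> exists m : int, x = m%:~R * pi.
Proof.
move=> sx.
set m := Num.floor (x / pi).
have pi0 := @pi_gt0 R.
have h1 : m%:~R <= x / pi by apply: real_floor_le; exact: num_real.
have h2 : x / pi < (m + 1)%:~R by apply: real_floorD1_gt; exact: num_real.
set r := x - m%:~R * pi.
have r0 : 0 <= r.
  by move: h1; rewrite ler_pdivlMr // /r => h1; lra.
have rpi : r < pi.
  move: h2; rewrite ltr_pdivrMr // intrD mulrDl mul1r /r => h2; lra.
have xr : x = r + m%:~R * pi by rewrite subrK.
move: sx; rewrite xr alt_int; last exact: sinDpi.
move/eqP; rewrite mulf_eq0 signr_eq0 /= => /eqP sr.
exists m; have [r00|rn0] := eqVneq r 0.
  by rewrite r00 add0r.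
have rp : 0 < r by rewrite lt0r rn0 r0.
by have := @sin_gt0_pi R r; rewrite rp rpi sr lt0r eqxx => /(_ isT).
Qed.
End A2.

Section A3.
Variable R : realType.
Import numFieldNormedType.Exports.

Definition cc (x : R) k := (~~ odd k)%:R * (-1) ^+ k./2 * x ^+ k.
Definition ss (x : R) k := (odd k)%:R * (-1) ^+ k.-1./2 * x ^+ k.

Lemma ccS_ssS x k : cc x k.+1 = - (x * ss x k) /\ ss x k.+1 = x * cc x k.
Proof.
rewrite /cc /ss; move: (odd_double_half k); set m := k./2.
case: (odd k) => /= <-.
  rewrite add1n /= odd_double /= doubleK !exprS; split; ring.
rewrite add0n odd_double /= uphalf_double !exprS; split; ring.
Qed.

Lemma cos_coeffE x k : cos_coeff x k = (k`!%:R)^-1 * cc x k.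
Proof. by rewrite /cos_coeff /cc /= -exprnP; ring. Qed.
Lemma sin_coeffE' x k : sin_coeff x k = (k`!%:R)^-1 * ss x k.
Proof. by rewrite /sin_coeff /ss /=; ring. Qed.

Variable n : nat.
Lemma rot_pow (M : 'M[R]_(n + n)) (v : 'rV[R]_n) x :
  (forall a b, row_mx (a *: v) (b *: v) *m M =
     row_mx ((- (x * b)) *: v) ((x * a) *: v)) ->
  forall k a b, row_mx (a *: v) (b *: v) *m M ^+ k =
    row_mx ((a * cc x k - b * ss x k) *: v) ((a * ss x k + b * cc x k) *: v).
Proof.
move=> HM; elim=> [|k IH] a b.
  by rewrite expr0 mulmx1 /cc /ss /= !mulr1 !mulr0 subr0 add0r.
rewrite exprSr -mulmxE mulmxA IH HM.
have [-> ->] := ccS_ssS x k.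
by congr row_mx; congr (_ *: v); ring.
Qed.

Lemma rot_series (M : 'M[R]_(n + n)) (v : 'rV[R]_n) x :
  (forall a b, row_mx (a *: v) (b *: v) *m M =
     row_mx ((- (x * b)) *: v) ((x * a) *: v)) ->
  forall N a b, row_mx (a *: v) (b *: v) *m
      series (fun k => (k`!%:R)^-1 *: M ^+ k) N =
    row_mx ((a * series (cos_coeff x) N - b * series (sin_coeff x) N) *: v)
           ((a * series (sin_coeff x) N + b * series (cos_coeff x) N) *: v).
Proof.
move=> HM; elim=> [|N IH] a b.
  rewrite /series /= !big_geq // mulmx0 !mulr0 subr0 addr0 !scale0r.
  by rewrite row_mx0.
rewrite !seriesSr mulmxDr IH -scalemxAr (rot_pow HM) scale_row_mx add_row_mx.
rewrite !scalerA -!scalerDl cos_coeffE sin_coeffE'.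
by congr row_mx; congr (_ *: v); ring.
Qed.

Lemma cvg_cos_series (x : R) : series (cos_coeff x) @ \oo --> cos x.
Proof. rewrite cos.unlock; exact: is_cvg_series_cos_coeff. Qed.
Lemma cvg_sin_series (x : R) : series (sin_coeff x) @ \oo --> sin x.
Proof. rewrite sin.unlock; exact: is_cvg_series_sin_coeff. Qed.

Lemma cvg_rowmx_scale (f g : nat -> R) (a b : R) (v : 'rV[R]_n) :
  f @ \oo --> a -> g @ \oo --> b ->
  (fun N => row_mx (f N *: v) (g N *: v)) @ \oo --> row_mx (a *: v) (b *: v).
Proof.
move=> fa gb.
have E c d : row_mx (c *: v) (d *: v) = c *: row_mx v 0 + d *: row_mx 0 v.
  by rewrite !scale_row_mx add_row_mx !scaler0 addr0 add0r.
rewrite E; under eq_cvg do rewrite E.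
by apply: cvgD; apply: cvgZ => //; exact: cvg_cst.
Qed.

Lemma rot_lim (M : 'M[R]_(n + n)) (v : 'rV[R]_n) x :
  (forall a b, row_mx (a *: v) (b *: v) *m M =
     row_mx ((- (x * b)) *: v) ((x * a) *: v)) ->
  forall a b, (fun N => row_mx (a *: v) (b *: v) *m
      series (fun k => (k`!%:R)^-1 *: M ^+ k) N) @ \oo -->
    row_mx ((a * cos x - b * sin x) *: v) ((a * sin x + b * cos x) *: v).
Proof.
move=> HM a b; under eq_cvg do rewrite (rot_series HM).
apply: cvg_rowmx_scale.
  by apply: cvgB; apply: cvgM => //; try exact: cvg_cst;
     [exact: cvg_cos_series | exact: cvg_sin_series].
by apply: cvgD; apply: cvgM => //; try exact: cvg_cst;
     [exact: cvg_sin_series | exact: cvg_cos_series].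
Qed.
End A3.

Section Lin1.
Variable R : realType.
Lemma lin1_mulE m k (f : 'rV[R]_m -> 'rV[R]_k) :
  (forall a x y, f (a *: x + y) = a *: f x + f y) ->
  forall w, w *m lin1_mx f = f w.
Proof.
move=> lf w.
have f0 : f 0 = 0.
  have := lf 1 0 0; rewrite !scale1r addr0 => h.
  by apply: (addrI (f 0)); rewrite addr0 -h.
have fs : f (\sum_(j < m) w 0 j *: delta_mx 0 j) =
          \sum_(j < m) w 0 j *: f (delta_mx 0 j).
  by elim/big_rec2: _ => [|j y1 y2 _ <-]; rewrite ?f0 ?lf.
rewrite {2}(row_sum_delta w) fs; apply/rowP => i.
rewrite summxE [in LHS]mxE; apply: eq_bigr => j _.
by rewrite /lin1_mx !mxE.
Qed.
End Lin1.

Section Lie.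
Variables (R : realType) (n : nat) (br : 'rV[R]_n -> 'rV[R]_n -> 'rV[R]_n).
Hypothesis Hlie : lie_algebra br.

Lemma br_lin_l a x y z : br (a *: x + y) z = a *: br x z + br y z.
Proof. by case: Hlie. Qed.
Lemma br_lin_r a x y z : br x (a *: y + z) = a *: br x y + br x z.
Proof. by case: Hlie. Qed.
Lemma br_alt x : br x x = 0.
Proof. by case: Hlie. Qed.
Lemma br_jacobi x y z : br x (br y z) + br y (br z x) + br z (br x y) = 0.
Proof. by case: Hlie. Qed.

Lemma br0l z : br 0 z = 0.
Proof.
have := br_lin_l 1 0 0 z; rewrite !scale1r addr0 => h.
by apply: (addrI (br 0 z)); rewrite addr0 -h.
Qed.
Lemma br0r z : br z 0 = 0.
Proof.
have := br_lin_r 1 z 0 0; rewrite !scale1r addr0 => h.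
by apply: (addrI (br z 0)); rewrite addr0 -h.
Qed.
Lemma brZl a x z : br (a *: x) z = a *: br x z.
Proof. by have := br_lin_l a x 0 z; rewrite addr0 br0l addr0. Qed.
Lemma brZr a x z : br z (a *: x) = a *: br z x.
Proof. by have := br_lin_r a z x 0; rewrite addr0 br0r addr0. Qed.
Lemma brDl x y z : br (x + y) z = br x z + br y z.
Proof. by have := br_lin_l 1 x y z; rewrite !scale1r. Qed.
Lemma brDr x y z : br z (x + y) = br z x + br z y.
Proof. by have := br_lin_r 1 z x y; rewrite !scale1r. Qed.
Lemma brNl x z : br (- x) z = - br x z.
Proof. by rewrite -scaleN1r brZl scaleN1r. Qed.
Lemma brNr x z : br z (- x) = - br z x.
Proof. by rewrite -scaleN1r brZr scaleN1r. Qed.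
Lemma br_anti x y : br x y = - br y x.
Proof.
have := br_alt (x + y); rewrite brDl !brDr !br_alt add0r addr0 => /eqP.
by rewrite addr_eq0 => /eqP.
Qed.

Lemma ad_mul x w : w *m ad br x = br x w.
Proof. by apply: lin1_mulE => a u v; rewrite br_lin_r. Qed.

Lemma adC_mul X Y w : w *m adC br X Y =
  row_mx (br X (lsubmx w) - br Y (rsubmx w)) (br X (rsubmx w) + br Y (lsubmx w)).
Proof.
apply: lin1_mulE => a u v.
rewrite !linearD !linearZ /= !br_lin_r scale_row_mx add_row_mx.
by congr row_mx; [rewrite scalerBr opprD addrACA | rewrite scalerDr addrACA].
Qed.

Lemma adC_eig Y v (x : R) : br Y v = x *: v ->
  forall a b, row_mx (a *: v) (b *: v) *m adC br 0 Y =
     row_mx ((- (x * b)) *: v) ((x * a) *: v).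
Proof.
move=> Hv a b; rewrite adC_mul row_mxKl row_mxKr !br0l sub0r add0r.
by rewrite !brZr Hv !scalerA scaleNr mulrC [x * a]mulrC.
Qed.


Lemma br_suml I (r : seq I) (P : pred I) (F : I -> 'rV[R]_n) z :
  br (\sum_(i <- r | P i) F i) z = \sum_(i <- r | P i) br (F i) z.
Proof. by elim/big_rec2: _ => [|i y1 y2 _ <-]; rewrite ?br0l ?brDl. Qed.

Lemma ad_comm x y : br x y = 0 -> ad br x *m ad br y = ad br y *m ad br x.
Proof.
move=> xy; apply/row_matrixP => i; rewrite !rowE !mulmxA !ad_mul.
set e := delta_mx 0 i.
have := br_jacobi x y e; rewrite xy br0r addr0 (br_anti e x) brNr => /eqP.
by rewrite subr_eq0 => /eqP.
Qed.

Variables (l : nat) (Hb : 'M[R]_(l, n)).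
Hypothesis Hcart : split_cartan br Hb.

Lemma simul_eig : exists2 P : 'M[R]_n, P \in unitmx &
  exists a : 'I_n -> 'rV[R]_l,
    forall r c, br (c *m Hb) (row r P) = hval (a r) c *: row r P.
Proof.
case: Hcart => _ Hab Hdiag _.
pose As := [seq ad br (delta_mx 0 j *m Hb) | j <- enum 'I_l].
have [P Punit /allP PAs] : codiagonalizable As.
  apply/codiagonalizableP; split.
    move=> A B /mapP[j _ ->] /mapP[j' _ ->].
    by apply: ad_comm; apply: Hab.
  by move=> A /mapP[j _ ->]; apply: Hdiag.
exists P => //.
have : forall j : 'I_l, exists d : 'rV[R]_n,
    P *m ad br (delta_mx 0 j *m Hb) = diag_mx d *m P.
  move=> j; have /PAs /= : ad br (delta_mx 0 j *m Hb) \in As.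
    by apply: map_f; rewrite mem_enum.
  move=> /diagonalizable_forPex[d Hd]; exists d.
  by apply/(simmxP Punit).
case/choice => d Hd.
exists (fun r => \row_j d j 0 r) => r c.
have Hrow j : br (delta_mx 0 j *m Hb) (row r P) = d j 0 r *: row r P.
  rewrite -ad_mul -row_mul Hd row_mul row_diag_mx.
  by rewrite -scalemxAl -rowE.
rewrite {1}(row_sum_delta c) mulmx_suml br_suml.
under eq_bigr do rewrite -scalemxAl brZl Hrow scalerA.
rewrite -scaler_suml /hval; congr (_ *: _); apply: eq_bigr => j _.
by rewrite mxE mulrC.
Qed.
End Lie.

Section Hval.
Variables (R : realType) (l : nat).
Lemma hvalDl (a b c : 'rV[R]_l) : hval (a + b) c = hval a c + hval b c.
Proof. by rewrite /hval -big_split; apply: eq_bigr => i _; rewrite mxE mulrDl. Qed.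
Lemma hvalZl k (a c : 'rV[R]_l) : hval (k *: a) c = k * hval a c.
Proof. by rewrite /hval mulr_sumr; apply: eq_bigr => i _; rewrite mxE mulrA. Qed.
Lemma hvalZr k (a c : 'rV[R]_l) : hval a (k *: c) = k * hval a c.
Proof.
rewrite /hval mulr_sumr; apply: eq_bigr => i _; rewrite mxE.
by rewrite mulrA [_ * k]mulrC mulrA.
Qed.
Lemma hval0l (c : 'rV[R]_l) : hval 0 c = 0.
Proof. by rewrite /hval big1 // => i _; rewrite mxE mul0r. Qed.
Lemma hval_suml I (r : seq I) (P : pred I) (F : I -> 'rV[R]_l) c :
  hval (\sum_(i <- r | P i) F i) c = \sum_(i <- r | P i) hval (F i) c.
Proof. by elim/big_rec2: _ => [|i y1 y2 _ <-]; rewrite ?hval0l ?hvalDl. Qed.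
Lemma hval_sumr I (r : seq I) (P : pred I) (F : I -> 'rV[R]_l) a :
  hval a (\sum_(i <- r | P i) F i) = \sum_(i <- r | P i) hval a (F i).
Proof.
rewrite /hval exchange_big /=; apply: eq_bigr => j _.
by rewrite summxE mulr_sumr.
Qed.
Lemma hvalE (a c : 'rV[R]_l) : hval a c = (a *m c^T) 0 0.
Proof. by rewrite /hval mxE; apply: eq_bigr => i _; rewrite mxE. Qed.
End Hval.

Section Part2.
Variables (R : realType) (n : nat) (br : 'rV[R]_n -> 'rV[R]_n -> 'rV[R]_n).
Hypothesis Hlie : lie_algebra br.
Variables (l : nat) (Hb : 'M[R]_(l, n)) (al yc : 'I_l -> 'rV[R]_l).
Hypothesis Hcart : split_cartan br Hb.
Hypothesis Hroots : simple_roots br Hb al.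
Hypothesis Hdual : forall i j : 'I_l, hval (al j) (yc i) = if i == j then pi else 0.
Import numFieldNormedType.Exports.

Lemma hval_dual (i : 'I_l) (kk : 'I_l -> int) :
  hval (\sum_(j < l) (kk j)%:~R *: al j) (yc i) = (kk i)%:~R * pi.
Proof.
rewrite hval_suml (bigD1 i) //= hvalZl Hdual eqxx big1 ?addr0 // => j ji.
have ij : i != j by rewrite eq_sym.
by rewrite hvalZl Hdual (negPf ij) mulr0.
Qed.

Lemma eig_int (i : 'I_l) (k : int) (a : 'rV[R]_l) (v : 'rV[R]_n) :
  (forall c, br (c *m Hb) v = hval a c *: v) -> v != 0 ->
  exists m : int, br (((k%:~R : R) *: yc i) *m Hb) v = (m%:~R * pi) *: v.
Proof.
move=> Hv v0; rewrite Hv hvalZr.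
have [->|a0] := eqVneq a 0.
  by exists 0; rewrite hval0l mulr0 mul0r.
case: Hroots => _ _ /(_ a) [].
  by split => //; exists v; split.
move=> kk [-> _]; exists (k * kk i); rewrite hval_dual.
by rewrite intrM mulrA.
Qed.


Definition Sser (M : 'M[R]_(n + n)) N := series (fun k => (k`!%:R)^-1 *: M ^+ k) N.

Lemma rot_lim_int Y v (m : int) : br Y v = (m%:~R * pi) *: v ->
  ((fun N => row_mx v 0 *m Sser (adC br 0 Y) N) @ \oo -->
      ((-1) ^+ `|m|%N : R) *: row_mx v 0) /\
  ((fun N => row_mx 0 v *m Sser (adC br 0 Y) N) @ \oo -->
      ((-1) ^+ `|m|%N : R) *: row_mx 0 v).
Proof.
move=> Hv; have HM := adC_eig Hlie Hv.
split.
  have E : row_mx v 0 = row_mx (1 *: v) (0 *: v) by rewrite scale1r scale0r.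
  rewrite E; have -> : ((-1) ^+ `|m|%N : R) *: row_mx (1 *: v) (0 *: v) =
    row_mx ((1 * cos (m%:~R * pi) - 0 * sin (m%:~R * pi)) *: v)
           ((1 * sin (m%:~R * pi) + 0 * cos (m%:~R * pi)) *: v).
    by rewrite sin_intpi cos_intpi scale_row_mx !scalerA !mul0r !mulr0 !mul1r !mulr1 subr0 addr0.
  exact: (rot_lim HM).
have E : row_mx 0 v = row_mx (0 *: v) (1 *: v) by rewrite scale1r scale0r.
rewrite E; have -> : ((-1) ^+ `|m|%N : R) *: row_mx (0 *: v) (1 *: v) =
  row_mx ((0 * cos (m%:~R * pi) - 1 * sin (m%:~R * pi)) *: v)
         ((0 * sin (m%:~R * pi) + 1 * cos (m%:~R * pi)) *: v).
  by rewrite sin_intpi cos_intpi scale_row_mx !scalerA !mul0r !mulr0 !mul1r !mulr1 subr0 add0r.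
exact: (rot_lim HM).
Qed.

Lemma part2 (i : 'I_l) (k : int) : odd `|k|%N ->
  let h := mexp (adC br 0 (((k%:~R : R) *: yc i) *m Hb)) in
  [/\ in_Gtilde br h, h *m h = 1%:M & h != 1%:M].
Proof.
move=> kodd h.
set Y := ((k%:~R : R) *: yc i) *m Hb.
set M := adC br 0 Y.
have [P Punit [a Ha]] := simul_eig Hlie Hcart.
have rowP0 r : row r P != 0.
  apply/eqP => H0.
  have : (delta_mx 0 r : 'rV[R]_n) *m P *m invmx P = 0 by rewrite -rowE H0 mul0mx.
  rewrite mulmxK // => /matrixP /(_ 0 r); rewrite !mxE !eqxx /= => /eqP.
  by rewrite oner_eq0.
have /choice [mm Hmm] : forall r : 'I_n,
    exists m : int, br Y (row r P) = (m%:~R * pi) *: row r P.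
  by move=> r; apply: (eig_int i k (Ha r) (rowP0 r)).
pose s r : R := (-1) ^+ `|mm r|%N.
pose Ds := diag_mx (\row_r s r).
pose Q := block_mx P 0 0 P.
pose D := block_mx Ds 0 0 Ds.
have Qunit : Q \in unitmx by rewrite unitmxE det_ublock unitrM -!unitmxE Punit.
have rowDs r : row r (Ds *m P) = s r *: row r P.
  by rewrite row_mul row_diag_mx mxE -scalemxAl rowE.
have cvgQ : (fun N => Q *m Sser M N) @ \oo --> D *m Q.
  rewrite /Q /D mulmx_block !mulmx0 !mul0mx !addr0 !add0r !block_mxEv.
  under eq_cvg do rewrite mul_col_mx.
  apply: mx_cvg_col; apply: mx_cvg_rows => q.
    rewrite !row_row_mx row0 rowDs.
    under eq_cvg do rewrite row_mul row_row_mx row0.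
    have [H1 _] := rot_lim_int (Hmm q).
    have -> : row_mx (s q *: row q P) (0 : 'rV[R]_n) = s q *: row_mx (row q P) 0.
      by rewrite scale_row_mx scaler0.
    exact: H1.
  rewrite !row_row_mx row0 rowDs.
  under eq_cvg do rewrite row_mul row_row_mx row0.
  have [_ H2] := rot_lim_int (Hmm q).
  have -> : row_mx (0 : 'rV[R]_n) (s q *: row q P) = s q *: row_mx 0 (row q P).
    by rewrite scale_row_mx scaler0.
  exact: H2.
have cvgS : Sser M @ \oo --> invmx Q *m (D *m Q).
  have := mx_cvg_mull (B := invmx Q) cvgQ.
  by under eq_cvg do rewrite mulmxA mulVmx // mul1mx.
have hE : h = invmx Q *m (D *m Q).
  by rewrite /h /mexp; apply: cvg_lim => //; exact: cvgS.
have ss1 q : s q * s q = 1.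
  by rewrite /s -exprD -signr_odd oddD addbb.
have DsDs : Ds *m Ds = 1%:M.
  apply/matrixP => p q; rewrite mul_diag_mx !mxE.
  by case: eqP => [->|_]; rewrite ?mulr1n ?ss1 ?mulr0n ?mulr0.
have DD : D *m D = 1%:M.
  rewrite /D mulmx_block !mulmx0 !mul0mx !addr0 !add0r DsDs.
  by rewrite [RHS]scalar_mx_block.
split.
- split.
    by rewrite /h -[mexp _]mulmx1; apply: GCexp; exact: GC1.
  move=> U; exists (U *m invmx P *m Ds *m P).
  have E1 : row_mx U (0 : 'rV[R]_n) = row_mx (U *m invmx P) 0 *m Q.
    by rewrite mul_row_block !mulmx0 !mul0mx addr0 add0r mulmxKV.
  rewrite hE {1}E1 !mulmxA mulmxK // /D /Q !mul_row_block.
  by rewrite !(mulmx0, mul0mx, addr0, add0r).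
- rewrite hE !mulmxA mulmxK // -(mulmxA _ D D) DD mulmx1 mulVmx //.
have [_ [v [v0 Hv]]] := (let: And3 H _ _ := Hroots in H) i.
have HY : br Y v = ((k%:~R : R) * pi) *: v.
  by rewrite /Y Hv hvalZr Hdual eqxx.
have [H1 _] := rot_lim_int HY.
have H2 := mx_cvg_mull (B := row_mx v 0) cvgS.
have Hh : row_mx v 0 *m h = (-1) ^+ `|k|%N *: row_mx v 0.
  by rewrite hE -(cvg_lim _ H2) // (cvg_lim _ H1).
move: Hh; rewrite -signr_odd kodd expr1 scaleN1r => Hh.
apply/negP => /eqP h1; move: Hh; rewrite h1 mulmx1 => /eqP.
rewrite -addr_eq0 -mulr2n -scaler_nat scaler_eq0 pnatr_eq0 /= => /eqP.
by rewrite -row_mx0 => /eq_row_mx [/eqP]; rewrite (negPf v0).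
Qed.
End Part2.

Section Part1.
Variables (R : realType) (l : nat) (al yc : 'I_l -> 'rV[R]_l).
Hypothesis Hfree : row_free (\matrix_(i < l) al i).
Hypothesis Hdual : forall i j : 'I_l, hval (al j) (yc i) = if i == j then pi else 0.

Lemma hvalBr (a c d : 'rV[R]_l) : hval a (c - d) = hval a c - hval a d.
Proof.
by rewrite /hval -sumrB; apply: eq_bigr => i _; rewrite !mxE mulrBr.
Qed.

Lemma hval_dual_r (kk : 'I_l -> int) (j : 'I_l) :
  hval (al j) (\sum_(i < l) (kk i)%:~R *: yc i) = (kk j)%:~R * pi.
Proof.
rewrite hval_sumr (bigD1 j) //= hvalZr Hdual eqxx big1 ?addr0 // => i ij.
by rewrite hvalZr Hdual (negPf ij) mulr0.
Qed.

Lemma cexp_real (x y : R) :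
  (exists r : R, cexp (x +i* y)%C = (r%:C)%C) <-> sin y = 0.
Proof.
split.
  move=> [r /(congr1 (@complex.Im _)) /=]; rewrite mul0r addr0 => /eqP.
  by rewrite mulf_eq0 (negPf (lt0r_neq0 (expR_gt0 x))) /= => /eqP.
move=> sy; exists (expR x * cos y); apply/eqP; rewrite eq_complex /=.
by rewrite sy !mul0r !mulr0 subr0 !addr0 !eqxx.
Qed.

Lemma part1 (cx cy : 'rV[R]_l) :
  (forall i, exists r : R, cexp (alphaC (al i) cx cy) = (r%:C)%C) <->
  (exists k : 'I_l -> int, cy = \sum_(i < l) (k i)%:~R *: yc i).
Proof.
rewrite /alphaC; split.
  move=> H.
  have /choice [mm Hmm] : forall i : 'I_l, exists m : int, hval (al i) cy = m%:~R * pi.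
    by move=> i; apply: sin_eq0_int; apply/cexp_real; exact: H.
  exists mm; apply/eqP; rewrite -subr_eq0; apply/eqP.
  set d := cy - _.
  have hd j : hval (al j) d = 0 by rewrite /d hvalBr hval_dual_r Hmm subrr.
  have A0 : (\matrix_(i < l) al i) *m d^T = 0.
    apply/matrixP => j z; rewrite !mxE -[RHS](hd j) hvalE !mxE.
    by rewrite (ord1 z); apply: eq_bigr => t _; rewrite !mxE.
  have : d^T = 0.
    have Au : (\matrix_(i < l) al i) \in unitmx by rewrite -row_free_unit.
    by rewrite -[d^T](mulKmx Au) A0 mulmx0.
  by move/(congr1 trmx); rewrite trmxK => ->; rewrite linear0.
move=> [kk ->] i; apply/cexp_real.
by rewrite hval_dual_r sin_intpi.
Qed.
End Part1.

Unset Implicit Arguments.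
Local Close Scope classical_set_scope.

Theorem lemma2p2p1 (R : realType) (n l : nat)
    (br : 'rV[R]_n -> 'rV[R]_n -> 'rV[R]_n) (Hb : 'M[R]_(l, n))
    (al : 'I_l -> 'rV[R]_l) (yc : 'I_l -> 'rV[R]_l) :
  semisimple br -> split_cartan br Hb -> simple_roots br Hb al ->
  (forall i j : 'I_l, hval (al j) (yc i) = if i == j then pi else 0) ->
  (forall cx cy : 'rV[R]_l,
     (forall i, exists r : R, cexp (alphaC (al i) cx cy) = (r%:C)%C) <->
     (exists k : 'I_l -> int, cy = \sum_(i < l) (k i)%:~R *: yc i))
  /\
  (forall (i : 'I_l) (k : int), odd `|k|%N ->
     let h := mexp (adC br 0 (((k%:~R : R) *: yc i) *m Hb)) in
     [/\ in_Gtilde br h, h *m h = 1%:M & h != 1%:M]).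
Proof.
move=> [Hlie _] Hcart Hroots Hdual; split.
  move=> cx cy; apply: part1 => //.
  by case: Hroots.
by move=> i k kodd; exact: (@part2 _ _ _ Hlie _ _ _ _ Hcart Hroots Hdual i k kodd).
Qed.
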